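(* Let $\eta>0$ and let $I=[u,u+\eta]$ and $J=[v,v+\eta]$ be two intervals contained in $[0,1]$. Then for all sufficiently large $n$ there exists an integer $a$ such that $$\frac{a}{F_n}\in I,\qquad \left\{\frac{F_{n-1}a}{F_n}\right\}\in J,\qquad 1\leqslant a<F_n,\qquad \gcd(a,F_n)=1.$$
   Context: $F_n$ denotes the $n$-th Fibonacci number ($F_1=F_2=1$, $F_{n+1}=F_n+F_{n-1}$). For a real number $t$, $\{t\}$ denotes its fractional part. *)

(* Defs.v *)
From Stdlib Require Import Reals Lra Lia Arith.
Open Scope R_scope.

Fixpoint fib (n : nat) : nat :=
  match n with
  | O => O
  | S m => match m with
           | O => 1%nat
           | S k => (fib m + fib k)%nat
           end
  end.

(* Main.v *)
Require Import Defs.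
From Stdlib Require Import Reals Lra Lia Arith ZArith Znumtheory List.
Import ListNotations.

Open Scope Z_scope.

Definition freeb (P : list Z) (x : Z) : bool :=
  forallb (fun p => negb (Z.eqb (x mod p) 0)) P.

Fixpoint cnt (P : list Z) (c : Z) (K : nat) : nat :=
  match K with O => O | S K' => (cnt P c K' + if freeb P (c + Z.of_nat K') then 1 else 0)%nat end.

Fixpoint cntm (q : Z) (P : list Z) (c : Z) (K : nat) : nat :=
  match K with O => O | S K' => (cntm q P c K' +
     if (Z.eqb ((c + Z.of_nat K') mod q) 0 && freeb P (c + Z.of_nat K'))%bool then 1 else 0)%nat end.

Lemma cnt_split q P c K : (cnt (q::P) c K + cntm q P c K = cnt P c K)%nat.
Proof.
  induction K; simpl; auto.
  unfold freeb in *; simpl.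
  destruct ((c + Z.of_nat K) mod q =? 0); destruct (forallb _ P); simpl; lia.
Qed.

Lemma modeq_div p x : prime p -> ((x mod p =? 0) = true <-> (p | x)).
Proof.
  intros Hp. pose proof (prime_ge_2 p Hp). rewrite Z.eqb_eq. split.
  - intros; apply Zmod_divide; auto; lia.
  - apply Zdivide_mod.
Qed.

Lemma freeb_mul q P y : prime q -> ~ In q P -> (forall p, In p P -> prime p) ->
  freeb P (q * y) = freeb P y.
Proof.
  intros Hq Hn HP. induction P as [|p P IH]; simpl; auto.
  unfold freeb in *. simpl. rewrite IH; [| intro; apply Hn; simpl; auto | intros; apply HP; simpl; auto].
  f_equal. f_equal.
  assert (Hp : prime p) by (apply HP; simpl; auto).
  destruct ((q*y) mod p =? 0) eqn:E1; destruct (y mod p =? 0) eqn:E2; auto.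
  - apply (modeq_div p) in E1; auto. apply prime_mult in E1; auto.
    destruct E1 as [E1|E1].
    + apply prime_div_prime in E1; auto. subst. exfalso; apply Hn; simpl; auto.
    + apply (modeq_div p) in E1; auto. congruence.
  - apply (modeq_div p) in E2; auto. assert ((p | q*y)) by (apply Z.divide_mul_r; auto).
    apply (modeq_div p) in H; auto. congruence.
Qed.

Lemma cntm_eq q P c j0 : prime q -> ~ In q P -> (forall p, In p P -> prime p) ->
  c <= q * j0 < c + q -> forall K, exists M : nat, cntm q P c K = cnt P j0 M /\
   c + Z.of_nat K <= q * (j0 + Z.of_nat M) < c + Z.of_nat K + q.
Proof.
  intros Hq Hn HP Hj. pose proof (prime_ge_2 q Hq).
  induction K as [|K IH].
  - exists O. simpl. lia.
  - destruct IH as [M [HM HB]].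
    simpl cntm.
    destruct ((c + Z.of_nat K) mod q =? 0) eqn:E.
    + apply (modeq_div q) in E; auto. destruct E as [t Ht].
      assert (Heq : q * (j0 + Z.of_nat M) = c + Z.of_nat K).
      { rewrite Ht in HB |- *. assert (t <= j0 + Z.of_nat M < t + 1) by nia. nia. }
      exists (S M). simpl cnt. rewrite <- HM. rewrite <- Heq.
      rewrite freeb_mul; auto. split. simpl. reflexivity. lia.
    + exists M. simpl. split. lia.
      assert (q * (j0 + Z.of_nat M) <> c + Z.of_nat K).
      { intro Heq. rewrite <- Heq in E. rewrite Z.mul_comm, Z.mod_mul in E by lia. simpl in E. discriminate. }
      lia.
Qed.

Open Scope R_scope.

Fixpoint rho (P : list Z) : R := match P with [] => 1 | q::P' => (1 - / IZR q) * rho P' end.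

Lemma rho_bounds P : (forall p, In p P -> prime p) -> (1/2)^(length P) <= rho P <= 1.
Proof.
  induction P as [|q P IH]; intros HP; simpl. lra.
  assert (Hq : (2 <= q)%Z) by (apply prime_ge_2, HP; simpl; auto).
  apply IZR_le in Hq.
  destruct IH as [IH1 IH2]. intros; apply HP; simpl; auto.
  assert (0 < /IZR q <= 1/2). { split. apply Rinv_0_lt_compat; lra. 
    unfold Rdiv. rewrite Rmult_1_l. apply Rinv_le_contravar; lra. }
  assert (0 < (1/2)^(length P)) by (apply pow_lt; lra).
  split; nra.
Qed.

Lemma sieve_bound P : NoDup P -> (forall p, In p P -> prime p) -> forall c K,
  Rabs (INR (cnt P c K) - INR K * rho P) <= 2^(length P) - 1.
Proof.
  induction P as [|q P IH]; intros HN HP c K.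
  - simpl. assert (cnt [] c K = K). { induction K; simpl; auto. rewrite IHK. lia. }
    rewrite H. rewrite Rmult_1_r, Rminus_diag, Rabs_R0. lra.
  - apply NoDup_cons_iff in HN. destruct HN as [Hn HN].
    assert (HP' : forall p, In p P -> prime p) by (intros; apply HP; simpl; auto).
    assert (Hq : prime q) by (apply HP; simpl; auto).
    pose proof (prime_ge_2 q Hq).
    set (j0 := ((c + q - 1) / q)%Z).
    assert (Hj : (c <= q * j0 < c + q)%Z).
    { pose proof (Z.div_mod (c + q - 1) q ltac:(lia)). pose proof (Z.mod_pos_bound (c+q-1) q ltac:(lia)). fold j0 in H0. lia. }
    destruct (cntm_eq q P c j0 Hq Hn HP' Hj K) as [M [HM HB]].
    pose proof (cnt_split q P c K) as Hs. rewrite HM in Hs.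
    assert (E : INR (cnt (q::P) c K) = INR (cnt P c K) - INR (cnt P j0 M)).
    { rewrite <- Hs, plus_INR. ring. }
    rewrite E. simpl rho. simpl length.
    pose proof (IH HN HP' c K) as I1. pose proof (IH HN HP' j0 M) as I2.
    destruct (rho_bounds P HP') as [R1 R2].
    assert (0 < (1/2)^(length P)) by (apply pow_lt; lra).
    assert (HqR : 2 <= IZR q) by (apply IZR_le; lia).
    assert (HB1 : IZR q * INR M > INR K - IZR q /\ IZR q * INR M < INR K + IZR q).
    { rewrite !INR_IZR_INZ. split.
      - apply Rgt_lt. rewrite <- mult_IZR, <- minus_IZR. apply IZR_lt. lia.
      - rewrite <- mult_IZR, <- plus_IZR. apply IZR_lt. lia. }
    set (iq := / IZR q).
    assert (Hiq : IZR q * iq = 1) by (unfold iq; field; lra).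
    assert (Hiq0 : 0 < iq) by (unfold iq; apply Rinv_0_lt_compat; lra).
    assert (HD : -1 <= INR M - INR K * iq <= 1).
    { destruct HB1 as [h1 h2].
      assert (E1 : IZR q * INR M * iq = INR M) by (unfold iq; field; lra).
      assert (E2 : (INR K - IZR q) * iq = INR K * iq - 1) by (unfold iq; field; lra).
      assert (E3 : (INR K + IZR q) * iq = INR K * iq + 1) by (unfold iq; field; lra).
      apply Rgt_lt in h1.
      pose proof (Rmult_lt_compat_r iq _ _ Hiq0 h1). pose proof (Rmult_lt_compat_r iq _ _ Hiq0 h2).
      rewrite E1 in *. rewrite E2 in *. rewrite E3 in *. split; lra. }
    assert (HD2 : Rabs ((INR M - INR K * iq) * rho P) <= 1).
    { rewrite Rabs_mult. rewrite (Rabs_right (rho P)) by lra.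
      assert (Rabs (INR M - INR K * iq) <= 1) by (apply Rabs_le; lra). nra. }
    clearbody iq j0.
    replace (INR (cnt P c K) - INR (cnt P j0 M) - INR K * ((1 - iq) * rho P))
      with (((INR (cnt P c K) - INR K * rho P) + - (INR (cnt P j0 M) - INR M * rho P))
            + - ((INR M - INR K * iq) * rho P)) by ring.
    eapply Rle_trans. apply Rabs_triang. rewrite Rabs_Ropp.
    eapply Rle_trans. apply Rplus_le_compat_r. apply Rabs_triang. rewrite Rabs_Ropp.
    simpl. lra.
Qed.

Lemma sieve_exists P : NoDup P -> (forall p, In p P -> prime p) -> forall c (K : nat),
  (4 ^ length P <= K)%nat -> exists k : nat, (k < K)%nat /\ freeb P (c + Z.of_nat k) = true.
Proof.
  intros HN HP c K HK.
  pose proof (sieve_bound P HN HP c K) as B.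
  destruct (rho_bounds P HP) as [R1 R2].
  apply le_INR in HK. rewrite pow_INR in HK.
  replace (INR 4) with 4 in HK by (simpl; ring).
  assert (H4 : (4 ^ length P * (1/2)^length P = 2 ^ length P)).
  { rewrite <- Rpow_mult_distr. f_equal. field. }
  assert (0 < (1/2)^(length P)) by (apply pow_lt; lra).
  assert (INR K * rho P >= 2 ^ length P).
  { rewrite <- H4. apply Rle_ge. apply Rmult_le_compat; try lra.
    apply pow_le; lra. }
  assert (Hc : (0 < cnt P c K)%nat).
  { apply INR_lt. simpl. pose proof (Rle_abs (-(INR (cnt P c K) - INR K * rho P))) as B2; rewrite Rabs_Ropp in B2; lra. }
  clear -Hc. induction K as [|K IH]; simpl in Hc. lia.
  destruct (freeb P (c + Z.of_nat K)) eqn:E.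
  - exists K. split; auto.
  - rewrite Nat.add_0_r in Hc. destruct (IH Hc) as [k [Hk1 Hk2]]. exists k; split; auto.
Qed.

Open Scope Z_scope.

Definition prodZ (P : list Z) : Z := fold_right Z.mul 1 P.

Lemma prime_div_exists : forall (n : nat) (N : Z), (Z.to_nat N <= n)%nat -> 1 < N ->
  exists p, prime p /\ (p | N).
Proof.
  induction n; intros N HN H1.
  - lia.
  - destruct (prime_dec N) as [Hp|Hp].
    + exists N; split; auto. apply Z.divide_refl.
    + destruct (not_prime_divide N H1 Hp) as [m [Hm Hd]].
      destruct (IHn m ltac:(lia) ltac:(lia)) as [p [Hp1 Hp2]].
      exists p; split; auto. eapply Z.divide_trans; eauto.
Qed.

Lemma factor_exists : forall (n : nat) (N : Z), (Z.to_nat N <= n)%nat -> 1 <= N ->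
  exists P, NoDup P /\ (forall p, In p P -> prime p) /\ prodZ P <= N /\
    (forall x, (forall p, In p P -> ~ (p | x)) -> rel_prime x N).
Proof.
  induction n; intros N HN H1.
  - lia.
  - destruct (Z.eq_dec N 1) as [E|E].
    + subst. exists []. split; [constructor|]. split; [intros; contradiction|].
      split; [simpl; lia|]. intros. apply rel_prime_sym, rel_prime_1.
    + destruct (prime_div_exists (Z.to_nat N) N ltac:(lia) ltac:(lia)) as [p [Hp [N' HN']]].
      pose proof (prime_ge_2 p Hp).
      assert (1 <= N') by nia.
      assert (N' < N) by nia.
      destruct (IHn N' ltac:(lia) ltac:(lia)) as [P [G2 [H3 [H4 H5]]]].
      assert (Hrel : forall x, ~ (p | x) -> rel_prime x N' -> rel_prime x N).
      { intros x Hx Hx'. rewrite HN'. apply rel_prime_mult; auto.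
        apply rel_prime_sym. apply prime_rel_prime; auto. }
      destruct (In_dec Z.eq_dec p P) as [Hi|Hi].
      * exists P. split; auto. split; auto. split. lia.
        intros x Hx. apply Hrel; auto.
      * exists (p :: P). split; [|split; [|split]].
        -- constructor; auto.
        -- intros q [Hq|Hq]; subst; auto.
        -- simpl. assert (0 <= prodZ P).
           { clear -H3. induction P; simpl. lia. assert (0 <= a) by (pose proof (prime_ge_2 a (H3 a (or_introl eq_refl))); lia).
             apply Z.mul_nonneg_nonneg; auto. apply IHP; intros; apply H3; simpl; auto. }
           nia.
        -- intros x Hx. apply Hrel. apply Hx; simpl; auto. apply H5. intros; apply Hx; simpl; auto.
Qed.

Lemma len_bound : forall P, NoDup P -> (forall p, In p P -> 2 <= p) ->
  exists t : nat, (length P <= 256 + t)%nat /\ 256 ^ (Z.of_nat t) <= prodZ P.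
Proof.
  intros P HN HP.
  set (S := filter (fun p => p <? 256) P).
  set (L := filter (fun p => negb (p <? 256)) P).
  assert (Hlen : length P = (length S + length L)%nat).
  { unfold S, L. clear. induction P; simpl; auto. destruct (a <? 256); simpl; lia. }
  assert (Hprod : prodZ P = prodZ S * prodZ L).
  { unfold S, L. clear. induction P; simpl; auto. destruct (a <? 256); simpl; rewrite IHP; ring. }
  assert (HS1 : 1 <= prodZ S).
  { unfold S. clear HN Hlen Hprod L S. induction P; simpl. lia.
    destruct (a <? 256); simpl. assert (2 <= a) by (apply HP; simpl; auto).
    assert (1 <= prodZ (filter (fun p => p <? 256) P)) by (apply IHP; intros; apply HP; simpl; auto). nia.
    apply IHP; intros; apply HP; simpl; auto. }
  assert (HL : 256 ^ Z.of_nat (length L) <= prodZ L).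
  { unfold L. clear HN Hlen Hprod HS1 L S. induction P; simpl. lia.
    destruct (a <? 256) eqn:E; simpl.
    apply IHP; intros; apply HP; simpl; auto.
    apply Z.ltb_ge in E.
    assert (256 ^ Z.of_nat (length (filter (fun p : Z => negb (p <? 256)) P)) <=
      prodZ (filter (fun p : Z => negb (p <? 256)) P)) by (apply IHP; intros; apply HP; simpl; auto).
    set (k := length (filter (fun p : Z => negb (p <? 256)) P)) in *.
    change (Z.pow_pos 256 (Pos.of_succ_nat k)) with (256 ^ Z.of_nat (S k)).
    rewrite Nat2Z.inj_succ, Z.pow_succ_r by lia.
    assert (0 <= 256 ^ Z.of_nat (length (filter (fun p : Z => negb (p <? 256)) P))) by (apply Z.pow_nonneg; lia).
    nia. }
  assert (HSl : (length S <= 256)%nat).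
  { replace 256%nat with (length (map Z.of_nat (seq 0 256))) by (rewrite length_map, length_seq; auto).
    apply NoDup_incl_length. unfold S; apply NoDup_filter; auto.
    intros x Hx. unfold S in Hx. apply filter_In in Hx. destruct Hx as [Hx1 Hx2].
    apply Z.ltb_lt in Hx2. assert (2 <= x) by auto.
    apply in_map_iff. exists (Z.to_nat x). split. lia. apply in_seq. lia. }
  exists (length L). split. lia. rewrite Hprod. nia.
Qed.

Open Scope Z_scope.

Definition Fz (k : nat) : Z := Z.of_nat (fib k).

Lemma Fz_SS k : Fz (S (S k)) = Fz (S k) + Fz k.
Proof. unfold Fz. change (fib (S (S k))) with (fib (S k) + fib k)%nat. lia. Qed.

Lemma Fz_0 : Fz 0 = 0. Proof. reflexivity. Qed.
Lemma Fz_1 : Fz 1 = 1. Proof. reflexivity. Qed.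

Lemma Fz_pos k : 1 <= Fz (S k).
Proof.
  induction k as [k IH] using lt_wf_ind. destruct k. reflexivity.
  rewrite Fz_SS. assert (0 <= Fz k) by (unfold Fz; lia). specialize (IH k ltac:(lia)). lia.
Qed.

Lemma Fz_mono k : Fz k <= Fz (S k).
Proof. destruct k. unfold Fz; simpl; lia. rewrite Fz_SS. unfold Fz; lia. Qed.

Lemma fib_add a : forall b, Fz (a + b + 1) = Fz (a+1) * Fz (b+1) + Fz a * Fz b.
Proof.
  induction a; intros b.
  - replace (0 + b + 1)%nat with (b+1)%nat by lia. replace (0+1)%nat with 1%nat by lia.
    change (Fz 1) with 1. change (Fz 0) with 0. ring.
  - replace (S a + b + 1)%nat with (a + S b + 1)%nat by lia. rewrite IHa.
    replace (S b + 1)%nat with (S (S b)) by lia. replace (S a + 1)%nat with (S (S a)) by lia.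
    rewrite !Fz_SS. replace (a+1)%nat with (S a) by lia. replace (b+1)%nat with (S b) by lia. ring.
Qed.

Fixpoint sg (m : nat) : Z := match m with O => 1 | S m' => - sg m' end.

Lemma sg_sq m : sg m * sg m = 1.
Proof. induction m; simpl; lia. Qed.

Lemma docagne j : forall m, Fz (m + j + 1) * Fz (m + 1) - Fz (m + j + 2) * Fz m = sg m * Fz (j + 1).
Proof.
  induction m.
  - replace (0 + j + 1)%nat with (j+1)%nat by lia. replace (0+1)%nat with 1%nat by lia.
    change (Fz 1) with 1. change (Fz 0) with 0. change (sg 0) with 1. ring.
  - simpl sg. replace (- sg m * Fz (j + 1)) with (- (sg m * Fz (j + 1))) by ring. rewrite <- IHm.
    replace (S m + j + 1)%nat with (m + j + 2)%nat by lia.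
    replace (S m + j + 2)%nat with (S (S (m + j + 1)))%nat by lia.
    replace (S m + 1)%nat with (S (S m)) by lia.
    rewrite !Fz_SS. replace (m + j + 2)%nat with (S (m + j + 1)) by lia.
    replace (m + 1)%nat with (S m) by lia. ring.
Qed.

Open Scope Z_scope.

Lemma sg_cases m : sg m = 1 \/ sg m = -1.
Proof. induction m; simpl; lia. Qed.

Lemma sg_S p : sg (p+1) = - sg p.
Proof. replace (p+1)%nat with (S p) by lia. reflexivity. Qed.

Lemma L1 c d M : 0 < c -> -M < d <= 0 -> -(c*M) < c*d <= 0.
Proof. intros. nia. Qed.
Lemma L1' c d M : 0 <= c -> -M < d <= 0 -> -(c*M) <= c*d <= 0.
Proof. intros. nia. Qed.
Lemma L2 N z w : 0 < N -> N*w < N*z -> w < z.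
Proof. intros. nia. Qed.
Lemma L2' N z w : 0 < N -> N*w <= N*z -> w <= z.
Proof. intros. nia. Qed.
Lemma L3 a b c d : 0 <= a <= b -> 0 <= c <= d -> 0 <= a * c <= b * d.
Proof. intros. nia. Qed.

Lemma EVid (A1 B0 A0 B1 s x y be al : Z) : s*s = 1 ->
  (A1*B0 + A0*B1)*(s*(x*B0 - y*B1)) - (A1*B0+A0*B1)*be =
  s*(B0*((A1*B0+A0*B1)*x - (B1*al + A1*s*be)) - B1*((A1*B0+A0*B1)*y - (B0*al - A0*s*be))).
Proof.
  intros H. transitivity (s*(B0*((A1*B0+A0*B1)*x - (B1*al + A1*s*be)) - B1*((A1*B0+A0*B1)*y - (B0*al - A0*s*be)))
    + (A1*B0+A0*B1)*be*(s*s-1)). ring. rewrite H. ring.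
Qed.

Lemma core (n : nat) (al be : Z) : (3 <= n)%nat ->
  exists (G : Z) (t : nat) (a V Qz : Z),
    1 <= G /\ G * G <= 25 * Fz n /\ 256 ^ Z.of_nat t <= Fz n /\
    al - G < a <= al + Z.of_nat (4 ^ (256 + t)) * G /\
    be - G - Z.of_nat (4 ^ (256 + t)) * G < V < be + G + Z.of_nat (4 ^ (256 + t)) * G /\
    Fz (n - 1) * a = Fz n * Qz + V /\
    rel_prime a (Fz n).
Proof.
  intros Hn3.
  set (p := ((n - 3) / 2)%nat).
  assert (Hp : (n = 2*p+3 \/ n = 2*p+4)%nat).
  { pose proof (Nat.div_mod (n-3) 2 ltac:(lia)). pose proof (Nat.mod_upper_bound (n-3) 2 ltac:(lia)).
    fold p in H. lia. }
  clearbody p.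
  set (j := (n - p - 2)%nat).
  assert (Hj : (j = p + 1 \/ j = p + 2)%nat) by (unfold j; lia).
  assert (HnE : n = (p + j + 2)%nat) by (unfold j; lia).
  assert (Hn1 : (n - 1 = p + j + 1)%nat) by (unfold j; lia).
  clearbody j.
  set (A0 := Fz (p+1)). set (A1 := Fz (p+2)). set (B0 := Fz (j+1)). set (B1 := Fz j).
  set (N := Fz n). set (Fm := Fz (n-1)). set (Fp := Fz p). set (s := sg p).
  assert (I1 : N = A1*B0 + A0*B1).
  { unfold N, A1, B0, A0, B1. rewrite HnE. pose proof (fib_add (p+1) j) as E.
    replace (p + 1 + j + 1)%nat with (p + j + 2)%nat in E by lia.
    replace (p + 1 + 1)%nat with (p + 2)%nat in E by lia. exact E. }
  assert (I2 : Fm*A0 = N*Fp + s*B0).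
  { unfold Fm, A0, N, Fp, s, B0. rewrite Hn1, HnE. pose proof (docagne j p) as E. lia. }
  assert (I3 : Fm*A1 = N*A0 - s*B1).
  { unfold Fm, A1, N, A0, s, B1. rewrite Hn1, HnE. pose proof (docagne (j-1) (p+1)) as E.
    replace (p + 1 + (j - 1) + 1)%nat with (p + j + 1)%nat in E by lia.
    replace (p + 1 + (j - 1) + 2)%nat with (p + j + 2)%nat in E by lia.
    replace (p + 1 + 1)%nat with (p + 2)%nat in E by lia.
    replace (j - 1 + 1)%nat with j in E by lia.
    rewrite sg_S in E. lia. }
  assert (I4 : A1*A1 - (A1 + A0)*A0 = -s).
  { unfold A1, A0, s. pose proof (docagne 0 (p+1)) as E.
    replace (p + 1 + 0 + 1)%nat with (p + 2)%nat in E by lia.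
    replace (p + 1 + 0 + 2)%nat with (S (S (p + 1)))%nat in E by lia.
    rewrite Fz_SS in E. replace (S (p+1)) with (p+2)%nat in E by lia.
    rewrite sg_S in E. change (Fz (0+1)) with 1 in E. replace (p+1+1)%nat with (p+2)%nat in E by lia. lia. }
  assert (He : exists e, (e = 0 \/ e = 1) /\ B0 = A1 + e*A0 /\ B1 = A0 + e*(A1 - A0)).
  { destruct Hj as [Hj|Hj]; subst j.
    - exists 0. split; auto. unfold B0, B1, A1, A0. replace (p+1+1)%nat with (p+2)%nat by lia. lia.
    - exists 1. split; auto. unfold B0, B1, A1, A0. replace (p+2+1)%nat with (S (S (p+1))) by lia.
      rewrite Fz_SS. replace (S (p+1)) with (p+2)%nat by lia. lia. }
  destruct He as [e [He [HB0 HB1]]].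
  assert (Hss : s * s = 1) by apply sg_sq.
  assert (Hs : s = 1 \/ s = -1) by apply sg_cases.
  assert (HA0 : 1 <= A0) by (unfold A0; replace (p+1)%nat with (S p) by lia; apply Fz_pos).
  assert (HA01 : A0 <= A1) by (unfold A0, A1; replace (p+2)%nat with (S (p+1)) by lia; apply Fz_mono).
  assert (HBB : A1 <= B0 <= A1 + A0 /\ A0 <= B1 <= A1) by (destruct He; subst e; lia).
  assert (HN : A1 * A1 <= N).
  { rewrite I1. assert (A1*A1 <= A1*B0) by (apply Z.mul_le_mono_nonneg_l; lia).
    assert (0 <= A0*B1) by (apply Z.mul_nonneg_nonneg; lia). lia. }
  assert (HN1 : 1 <= N) by (pose proof (L3 1 A1 1 A1); lia).
  set (u := s * (A1 + A0 + e*A1 + B1)). set (w := -s).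
  assert (Hbez : u * A0 + w * N = 1).
  { assert (u * A0 + w * N = s * ((A1 + A0)*A0 - A1*A1)).
    { unfold u, w. rewrite I1, HB0. ring. }
    rewrite H. replace ((A1 + A0)*A0 - A1*A1) with s by lia. exact Hss. }
  set (X := B1*al + A1*s*be). set (Y := B0*al - A0*s*be).
  set (x := X / N). set (y := Y / N).
  assert (Hx : N * x <= X < N * x + N).
  { pose proof (Z.div_mod X N ltac:(lia)). pose proof (Z.mod_pos_bound X N ltac:(lia)). unfold x. lia. }
  assert (Hy : N * y <= Y < N * y + N).
  { pose proof (Z.div_mod Y N ltac:(lia)). pose proof (Z.mod_pos_bound Y N ltac:(lia)). unfold y. lia. }
  set (a0 := x*A0 + y*A1). set (V0 := s*(x*B0 - y*B1)).
  set (d1 := N*x - X). set (d2 := N*y - Y).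
  assert (Ea : N*a0 - N*al = A0*d1 + A1*d2).
  { unfold a0, d1, d2, X, Y. rewrite I1. ring. }
  assert (EV : N*V0 - N*be = s*(B0*d1 - B1*d2)).
  { unfold V0, d1, d2, X, Y. rewrite I1. apply EVid. exact Hss. }
  set (G := A0 + A1 + B0 + B1).
  assert (HG1 : 1 <= G) by (unfold G; lia).
  assert (Hd1 : -N < d1 <= 0) by (unfold d1; lia).
  assert (Hd2 : -N < d2 <= 0) by (unfold d2; lia).
  assert (Ha0 : al - G < a0 <= al).
  { pose proof (L1 A0 d1 N ltac:(lia) Hd1). pose proof (L1' A1 d2 N ltac:(lia) Hd2).
    split.
    - assert (al - (A0 + A1) < a0).
      { apply (L2 N); [lia|]. assert (N*(al - (A0+A1)) = N*al - A0*N - A1*N) by ring. lia. }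
      unfold G. lia.
    - apply (L2' N); lia. }
  assert (HV0 : be - G < V0 < be + G).
  { pose proof (L1 B0 d1 N ltac:(lia) Hd1). pose proof (L1 B1 d2 N ltac:(lia) Hd2).
    assert (-(B0+B1)*N < N*V0 - N*be < (B0+B1)*N).
    { destruct Hs as [Hs|Hs]; rewrite Hs in EV; lia. }
    split.
    - assert (be - (B0 + B1) < V0).
      { apply (L2 N); [lia|]. assert (N*(be - (B0+B1)) = N*be - (B0+B1)*N) by ring. lia. }
      unfold G; lia.
    - assert (V0 < be + (B0 + B1)).
      { apply (L2 N); [lia|]. assert (N*(be + (B0+B1)) = N*be + (B0+B1)*N) by ring. lia. }
      unfold G; lia. }
  assert (HGG : G * G <= 25 * N).
  { assert (G <= 5 * A1) by (unfold G; lia). pose proof (L3 G (5*A1) G (5*A1) ltac:(lia) ltac:(lia)). lia. }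
  destruct (factor_exists (Z.to_nat N) N ltac:(lia) HN1) as [P [HPN [HPp [HPprod HPrel]]]].
  destruct (len_bound P HPN) as [t [Ht1 Ht2]].
  { intros q Hq. apply prime_ge_2. auto. }
  set (K := (4 ^ (256 + t))%nat).
  assert (HK : (4 ^ length P <= K)%nat) by (apply Nat.pow_le_mono_r; lia).
  set (c := u * a0).
  destruct (sieve_exists P HPN HPp c K HK) as [k [Hk Hfree]].
  assert (Hrelc : rel_prime (c + Z.of_nat k) N).
  { apply HPrel. intros q Hq Hd. unfold freeb in Hfree. rewrite forallb_forall in Hfree.
    specialize (Hfree q Hq). apply (modeq_div q) in Hd; auto. rewrite Hd in Hfree. discriminate. }
  exists G, t, (a0 + Z.of_nat k * A0), (V0 + s * Z.of_nat k * B0), ((x + Z.of_nat k)*Fp + y*A0).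
  assert (HKz : Z.of_nat k < Z.of_nat K) by lia.
  fold K. fold N. fold Fm.
  split; [auto|]. split; [auto|]. split; [lia|].
  split.
  { pose proof (L3 (Z.of_nat k) (Z.of_nat K) A0 G ltac:(lia) ltac:(unfold G; lia)). lia. }
  split.
  { pose proof (L3 (Z.of_nat k) (Z.of_nat K) B0 G ltac:(lia) ltac:(unfold G; lia)).
    destruct Hs as [Hs|Hs]; rewrite Hs; lia. }
  split.
  { transitivity ((x + Z.of_nat k) * (Fm*A0) + y*(Fm*A1)). unfold a0; ring.
    rewrite I2, I3. unfold V0. ring. }
  assert (Hm : A0*(c + Z.of_nat k) = (a0 + Z.of_nat k * A0) - N*(w*a0)).
  { assert (a0 + Z.of_nat k * A0 = a0*(u*A0 + w*N) + Z.of_nat k * A0) by (rewrite Hbez; ring).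
    rewrite H. unfold c. ring. }
  apply rel_prime_bezout in Hrelc. destruct Hrelc as [u1 v1 Huv].
  apply bezout_rel_prime.
  apply Bezout_intro with (u := u1*u) (v := -u1*u*w*a0 + u1*(c + Z.of_nat k)*w + v1*(u*A0 + w*N)).
  transitivity (u1*u*(A0*(c+Z.of_nat k)) + N*(u1*(c+Z.of_nat k)*w + v1*(u*A0+w*N))).
  rewrite Hm. ring.
  transitivity ((u1 * (c + Z.of_nat k) + v1 * N) * (u * A0 + w * N)). ring.
  rewrite Huv, Hbez. ring.
Qed.

Open Scope R_scope.

Lemma gcd_nat (a b : nat) : rel_prime (Z.of_nat a) (Z.of_nat b) -> Nat.gcd a b = 1%nat.
Proof.
  intros H. destruct H as [_ _ H].
  assert (Hc : forall g c, Nat.divide g c -> (Z.of_nat g | Z.of_nat c)%Z).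
  { intros g c [z Hz]. exists (Z.of_nat z). rewrite Hz, Nat2Z.inj_mul. reflexivity. }
  specialize (H _ (Hc _ _ (Nat.gcd_divide_l a b)) (Hc _ _ (Nat.gcd_divide_r a b))).
  apply Z.divide_1_r_nonneg in H; lia.
Qed.

Lemma fib_ge n : (n - 1 <= fib n)%nat.
Proof.
  induction n as [n IH] using lt_wf_ind.
  destruct n as [|[|n]]. simpl; lia. simpl; lia.
  change (fib (S (S n))) with (fib (S n) + fib n)%nat.
  pose proof (Fz_pos n) as H. unfold Fz in H.
  destruct n. simpl. lia.
  specialize (IH (S (S n)) ltac:(lia)). pose proof (Fz_pos n). unfold Fz in *. lia.
Qed.

Lemma div_nonneg a b : 0 <= a -> 0 < b -> 0 <= a / b.
Proof. intros. unfold Rdiv. apply Rmult_le_pos; auto. left; apply Rinv_0_lt_compat; auto. Qed.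
Lemma div_pos a b : 0 < a -> 0 < b -> 0 < a / b.
Proof. intros. unfold Rdiv. apply Rmult_lt_0_compat; auto. apply Rinv_0_lt_compat; auto. Qed.

Lemma pow4_le x y : 0 <= x -> 0 <= y -> x^4 <= y^4 -> x <= y.
Proof.
  intros Hx Hy H. destruct (Rle_lt_dec x y) as [h|h]; auto.
  exfalso. assert (y^4 < x^4).
  { assert (y^2 <= x^2) by nra. assert (y^2 < x^2 \/ y^2 = x^2) by lra.
    replace (y^4) with (y^2*y^2) by ring. replace (x^4) with (x^2*x^2) by ring. nra. }
  lra.
Qed.

Lemma pos_div_bounds (lo hi x Nr : R) : 0 < Nr -> lo * Nr <= x <= hi * Nr -> lo <= x / Nr <= hi.
Proof.
  intros HN [H1 H2]. split.
  - replace lo with (lo * Nr / Nr) by (field; lra). unfold Rdiv. apply Rmult_le_compat_r; auto.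
    left; apply Rinv_0_lt_compat; auto.
  - replace hi with (hi * Nr / Nr) by (field; lra). unfold Rdiv. apply Rmult_le_compat_r; auto.
    left; apply Rinv_0_lt_compat; auto.
Qed.

Theorem lemma1 :
  forall (eta u v : R),
    0 < eta ->
    0 <= u -> u + eta <= 1 ->
    0 <= v -> v + eta <= 1 ->
    exists N : nat, forall n : nat, (N <= n)%nat ->
      exists a : nat,
        u <= INR a / INR (fib n) <= u + eta /\
        v <= frac_part (INR (fib (n - 1)) * INR a / INR (fib n)) <= v + eta /\
        (1 <= a < fib n)%nat /\
        Nat.gcd a (fib n) = 1%nat.
Proof.
  intros eta u v Heta Hu Hue Hv Hve.
  set (C := 4 ^ 256).
  assert (HC : 0 < C) by (unfold C; apply pow_lt; lra).
  assert (He4 : 0 < eta ^ 4) by (apply pow_lt; lra).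
  set (M := 625 * 256 * C^4 / eta^4 + 6400 / eta^2 + 1).
  assert (HM1 : 625 * 256 * C^4 <= eta^4 * M).
  { unfold M. assert (0 <= 6400 / eta^2 + 1).
    { assert (0 < eta^2) by (apply pow_lt; lra). assert (0 <= 6400/eta^2) by (apply div_nonneg; lra). lra. }
    replace (eta^4 * (625 * 256 * C ^ 4 / eta ^ 4 + 6400 / eta ^ 2 + 1))
      with (625 * 256 * C^4 + eta^4 * (6400 / eta ^ 2 + 1)) by (field; lra).
    assert (0 <= eta^4 * (6400 / eta ^ 2 + 1)) by (apply Rmult_le_pos; lra). lra. }
  assert (HM2 : 6400 <= eta^2 * M).
  { unfold M. assert (0 < eta^2) by (apply pow_lt; lra).
    assert (0 <= 625 * 256 * C ^ 4 / eta ^ 4) by (apply div_nonneg; [|lra]; assert (0 < C^4) by (apply pow_lt; lra); lra).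
    replace (eta^2 * (625 * 256 * C ^ 4 / eta ^ 4 + 6400 / eta ^ 2 + 1))
      with (eta^2 * (625 * 256 * C ^ 4 / eta ^ 4 + 1) + 6400) by (field; lra).
    assert (0 <= eta^2 * (625 * 256 * C ^ 4 / eta ^ 4 + 1)) by (apply Rmult_le_pos; lra). lra. }
  assert (HM0 : 1 <= M).
  { unfold M. assert (0 < eta^2) by (apply pow_lt; lra).
    assert (0 <= 625 * 256 * C ^ 4 / eta ^ 4) by (apply div_nonneg; [|lra]; assert (0 < C^4) by (apply pow_lt; lra); lra).
    assert (0 <= 6400/eta^2) by (apply div_nonneg; lra). lra. }
  destruct (archimed M) as [Hup _].
  exists (Z.to_nat (up M) + 3)%nat.
  intros n Hn.
  set (Nr := INR (fib n)).
  assert (HNM : M <= Nr).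
  { unfold Nr. pose proof (fib_ge n). apply le_INR in H.
    assert (INR (Z.to_nat (up M)) <= INR (n - 1)) by (apply le_INR; lia).
    rewrite INR_IZR_INZ, Z2Nat.id in H0 by (apply le_0_IZR; lra). lra. }
  assert (HNr : 0 < Nr) by lra.
  set (al := Int_part ((u + eta/4) * Nr)).
  set (be := Int_part ((v + eta/2) * Nr)).
  destruct (core n al be ltac:(lia)) as [G [t [a [V [Qz [HG1 [HGG [Ht [Ha [HV [HQ Hrel]]]]]]]]]]].
  assert (ENr : IZR (Fz n) = Nr) by (unfold Fz, Nr; rewrite <- INR_IZR_INZ; reflexivity).
  set (Gr := IZR G). set (Kr := IZR (Z.of_nat (4 ^ (256 + t)))). set (Q := 4 ^ t).
  assert (EK : Kr = C * Q).
  { unfold Kr, C, Q. rewrite <- INR_IZR_INZ, pow_INR, pow_add.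
    replace (INR 4) with 4 by (simpl; ring). reflexivity. }
  assert (HQ4 : Q^4 <= Nr).
  { unfold Q. rewrite <- pow_mult. replace (t * 4)%nat with (4 * t)%nat by lia. rewrite pow_mult.
    rewrite <- ENr. replace (4^4) with (IZR 256) by (simpl; ring). rewrite pow_IZR. apply IZR_le. exact Ht. }
  assert (HQ0 : 0 < Q) by (unfold Q; apply pow_lt; lra).
  assert (HG1r : 1 <= Gr) by (unfold Gr; apply IZR_le; lia).
  assert (HGGr : Gr * Gr <= 25 * Nr).
  { rewrite <- ENr. unfold Gr. rewrite <- mult_IZR. replace 25 with (IZR 25) by reflexivity.
    rewrite <- mult_IZR. apply IZR_le. exact HGG. }
  assert (R2 : Kr * Gr <= eta * Nr / 4).
  { apply pow4_le. rewrite EK. assert (0 <= C*Q) by nra. nra.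
    assert (0 <= eta * Nr) by nra. lra.
    rewrite EK. replace ((C * Q * Gr)^4) with (C^4 * Q^4 * (Gr*Gr)^2) by ring.
    assert (0 < C^4) by (apply pow_lt; lra).
    assert (Gr*Gr >= 0) by nra.
    assert ((Gr*Gr)^2 <= (25*Nr)^2) by (apply pow_incr; lra).
    assert (C^4 * Q^4 * (Gr*Gr)^2 <= C^4 * Nr * (25*Nr)^2).
    { apply Rmult_le_compat; try lra. apply Rmult_le_pos; [lra| apply pow_le; lra]. apply pow_le; nra.
      apply Rmult_le_compat_l; lra. }
    replace ((eta*Nr/4)^4) with (eta^4 * Nr * (Nr^3 / 256)) by field.
    assert (C^4 * Nr * (25*Nr)^2 = 625 * 256 * C^4 * (Nr^3/256)) by field.
    assert (0 < Nr^3/256) by (apply div_pos; [apply pow_lt|]; lra).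
    assert (625 * 256 * C^4 <= eta^4 * Nr).
    { apply Rle_trans with (eta^4 * M); auto. apply Rmult_le_compat_l; lra. }
    nra. }
  assert (R1 : Gr + 1 <= eta * Nr / 8).
  { apply Rle_trans with (2 * Gr). lra.
    apply pow4_le. lra. assert (0 <= eta*Nr) by nra. lra.
    replace ((2*Gr)^4) with (16 * (Gr*Gr)^2) by ring.
    assert ((Gr*Gr)^2 <= (25*Nr)^2) by (apply pow_incr; nra).
    assert (6400 <= eta^2 * Nr).
    { apply Rle_trans with (eta^2 * M); auto. apply Rmult_le_compat_l; [|lra]. apply pow_le; lra. }
    replace ((eta*Nr/8)^4) with ((eta^2*Nr)^2 * Nr^2 / 4096) by field.
    assert (6400^2 <= (eta^2 * Nr)^2) by (apply pow_incr; lra).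
    assert (0 < Nr^2) by (apply pow_lt; lra).
    nra. }
  destruct (base_Int_part ((u + eta/4) * Nr)) as [Hal1 Hal2]. fold al in Hal1, Hal2.
  destruct (base_Int_part ((v + eta/2) * Nr)) as [Hbe1 Hbe2]. fold be in Hbe1, Hbe2.
  assert (Har : IZR al - Gr < IZR a <= IZR al + Kr * Gr).
  { unfold Gr, Kr. rewrite <- mult_IZR, <- minus_IZR, <- plus_IZR. split; [apply IZR_lt|apply IZR_le]; lia. }
  assert (HVr : IZR be - Gr - Kr * Gr < IZR V < IZR be + Gr + Kr * Gr).
  { unfold Gr, Kr. rewrite <- mult_IZR, <- !minus_IZR, <- !plus_IZR. split; apply IZR_lt; lia. }
  assert (HK0 : 0 <= Kr * Gr) by (rewrite EK; apply Rmult_le_pos; [apply Rmult_le_pos|]; lra).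
  assert (Ha1 : u * Nr < IZR a) by nra.
  assert (Ha2 : IZR a <= (u + eta/2) * Nr) by nra.
  assert (HV1 : v * Nr < IZR V) by nra.
  assert (HV2 : IZR V < (v + 7*eta/8) * Nr) by nra.
  assert (Hapos : (0 < a)%Z) by (apply lt_IZR; nra).
  assert (Halt : (a < Fz n)%Z) by (apply lt_IZR; rewrite ENr; nra).
  assert (HVpos : 0 <= IZR V) by nra.
  assert (HVlt : IZR V < Nr) by nra.
  exists (Z.to_nat a).
  assert (EA : INR (Z.to_nat a) = IZR a) by (rewrite INR_IZR_INZ, Z2Nat.id by lia; reflexivity).
  rewrite EA. fold Nr.
  split; [|split; [|split]].
  - apply pos_div_bounds; auto. lra.
  - assert (EF : INR (fib (n-1)) * IZR a / Nr = IZR Qz + IZR V / Nr).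
    { rewrite INR_IZR_INZ. change (Z.of_nat (fib (n-1))) with (Fz (n-1)).
      rewrite <- mult_IZR, HQ, plus_IZR, mult_IZR, ENr. field. lra. }
    rewrite EF.
    destruct (Int_part_frac_part_spec (IZR Qz + IZR V / Nr) Qz (IZR V / Nr)) as [_ Hf].
    { split. apply div_nonneg; lra. 
      apply (Rmult_lt_reg_r Nr); auto. unfold Rdiv. rewrite Rmult_assoc, Rinv_l by lra. lra. }
    reflexivity.
    rewrite <- Hf. apply pos_div_bounds; auto. lra.
  - unfold Fz in Halt. lia.
  - apply gcd_nat. rewrite Z2Nat.id by lia. exact Hrel.
Qed.
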